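(* Let $X,Y$ be real Hilbert spaces, $A\colon X\to Y$ compact linear with $\|A\|=1$, let $X_N\subset X$ be a linear subspace of dimension $N$, and $A_N=A|_{X_N}$. Let $\rho>0$, $C>0$, and assume: (i) $x^\dagger=A^\ast z\in X_N$ for some $z\in\operatorname{range}(A_N)$ with $\|z\|\le\rho$; (ii) for all $0<\alpha\le1$, the operator norm of $(\alpha I+A^\ast A)^{-1}A^\ast$ restricted to $\operatorname{range}(A_N)$ (as a map $\operatorname{range}(A_N)\to X$) is at most $CN$. Let $y^\dagger=Ax^\dagger$, $\delta\ge0$, and $y^\delta\in Y$ with $\|y^\delta-y^\dagger\|\le\delta$. Then for every $0<\alpha\le1$, $$\|T_\alpha y^\delta-x^\dagger\|\le\frac{\delta}{2\sqrt\alpha}+\begin{cases}\frac{\sqrt\alpha}{2}\rho&\text{if } \frac{1}{2CN}<\sqrt\alpha\le1,\\[1mm] \alpha CN\rho&\text{if }\sqrt\alpha\le\frac{1}{2CN}.\end{cases}$$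
   Context: $A^\ast$ denotes the adjoint of $A$ and $T_\alpha y=(A^\ast A+\alpha I)^{-1}A^\ast y$ is Tikhonov regularization with parameter $\alpha>0$. *)

(* Defs.v *)
From HB Require Import structures.
From Stdlib Require Import ClassicalEpsilon.
From mathcomp Require Import all_boot all_order all_algebra.
From mathcomp Require Import classical_sets reals.
Set Implicit Arguments. Unset Strict Implicit. Unset Printing Implicit Defensive.
Import Order.TTheory GRing.Theory Num.Theory.
Local Open Scope ring_scope.
Local Open Scope classical_set_scope.

Section Hilbert.
Variable R : realType.

Definition ipnorm (V : lmodType R) (ip : V -> V -> R) (x : V) : R :=
  Num.sqrt (ip x x).

Definition is_inner_product (V : lmodType R) (ip : V -> V -> R) : Prop :=
  [/\ (forall x y, ip x y = ip y x),
      (forall (a : R) x y z, ip (a *: x + y) z = a * ip x z + ip y z)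
    & (forall x, x != 0 -> 0 < ip x x)].

Definition ip_complete (V : lmodType R) (ip : V -> V -> R) : Prop :=
  forall u : nat -> V,
    (forall e : R, 0 < e -> exists n0 : nat, forall m n : nat,
        (n0 <= m)%N -> (n0 <= n)%N -> ipnorm ip (u m - u n) < e) ->
    exists l : V, forall e : R, 0 < e -> exists n0 : nat, forall n : nat,
        (n0 <= n)%N -> ipnorm ip (u n - l) < e.

Definition is_hilbert (V : lmodType R) (ip : V -> V -> R) : Prop :=
  is_inner_product ip /\ ip_complete ip.

Section Ops.
Variables (X Y : lmodType R) (ipX : X -> X -> R) (ipY : Y -> Y -> R).

Definition opnorm_on (S : set Y) (f : Y -> X) : R :=
  sup [set r : R | exists z, [/\ S z, ipnorm ipY z <= 1 & r = ipnorm ipX (f z)]].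

Definition opnorm (A : X -> Y) : R :=
  sup [set r : R | exists x, ipnorm ipX x <= 1 /\ r = ipnorm ipY (A x)].

Definition is_adjoint (A : X -> Y) (Astar : Y -> X) : Prop :=
  forall x y, ipY (A x) y = ipX x (Astar y).

(* compact operator: every bounded sequence is mapped to a sequence having a
   Cauchy (hence, Y being complete, convergent) subsequence, i.e. A maps bounded
   sets to relatively compact sets *)
Definition compact_op (A : X -> Y) : Prop :=
  forall u : nat -> X, (exists M : R, forall n, ipnorm ipX (u n) <= M) ->
  exists phi : nat -> nat, (forall n, (phi n < phi n.+1)%N) /\
    (forall e : R, 0 < e -> exists n0 : nat, forall m n : nat,
        (n0 <= m)%N -> (n0 <= n)%N -> ipnorm ipY (A (u (phi m)) - A (u (phi n))) < e).

Definition subspace_dim (XN : set X) (N : nat) : Prop :=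
  exists b : 'I_N -> X,
    (forall c : 'I_N -> R, \sum_(i < N) c i *: b i = 0 -> forall i, c i = 0) /\
    XN = [set x | exists c : 'I_N -> R, x = \sum_(i < N) c i *: b i].

Definition tikhonov (A : X -> Y) (Astar : Y -> X) (alpha : R) (y : Y) : X :=
  epsilon (inhabits (0 : X)) (fun x => Astar (A x) + alpha *: x = Astar y).

End Ops.
End Hilbert.

(* Main.v *)
Require Import Defs.
From HB Require Import structures.
From Stdlib Require Import ClassicalEpsilon.
From mathcomp Require Import all_boot all_order all_algebra.
From mathcomp Require Import boolp classical_sets reals.
From mathcomp Require Import ring lra.
Set Implicit Arguments. Unset Strict Implicit.
Import Order.TTheory GRing.Theory Num.Theory.
Local Open Scope ring_scope.
Local Open Scope classical_set_scope.

Section IP.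
Variable R : realType.
Variables (V : lmodType R) (ip : V -> V -> R) (hip : is_inner_product ip).

Lemma ip_sym x y : ip x y = ip y x.
Proof. by case: hip => h _ _; apply: h. Qed.

Lemma ip_lin a x y z : ip (a *: x + y) z = a * ip x z + ip y z.
Proof. by case: hip => _ h _; apply: h. Qed.

Lemma ip_pos x : x != 0 -> 0 < ip x x.
Proof. by case: hip => _ _ h; apply: h. Qed.

Lemma ip0l z : ip 0 z = 0.
Proof.
have := ip_lin 1 0 0 z; rewrite scaler0 addr0 mul1r => h; lra.
Qed.

Lemma ip0r z : ip z 0 = 0.
Proof. by rewrite ip_sym ip0l. Qed.

Lemma ipZl a x z : ip (a *: x) z = a * ip x z.
Proof. by have := ip_lin a x 0 z; rewrite addr0 ip0l addr0. Qed.

Lemma ipDl x y z : ip (x + y) z = ip x z + ip y z.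
Proof. by have := ip_lin 1 x y z; rewrite scale1r mul1r. Qed.

Lemma ipZr a x z : ip z (a *: x) = a * ip z x.
Proof. by rewrite ip_sym ipZl ip_sym. Qed.

Lemma ipDr x y z : ip z (x + y) = ip z x + ip z y.
Proof. by rewrite ip_sym ipDl !(ip_sym z). Qed.

Lemma ip_ge0 x : 0 <= ip x x.
Proof.
have [->|/ip_pos/ltW //] := eqVneq x 0; by rewrite ip0l.
Qed.

Lemma ip_eq0 x : ip x x = 0 -> x = 0.
Proof.
have [//|/ip_pos] := eqVneq x 0; by move=> h e; rewrite e ltxx in h.
Qed.

Lemma ipsq a b x y : ip (a *: x + b *: y) (a *: x + b *: y) =
  a ^+ 2 * ip x x + 2 * a * b * ip x y + b ^+ 2 * ip y y.
Proof.
rewrite !ipDl !ipDr !ipZl !ipZr (ip_sym y x); ring.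
Qed.

Lemma ipN x : ip (- x) (- x) = ip x x.
Proof.
have := ipsq 0 (-1) x x; rewrite scale0r add0r scaleN1r => ->; ring.
Qed.

Lemma ipB x y : ip (x - y) (x - y) = ip x x - 2 * ip x y + ip y y.
Proof.
have := ipsq 1 (-1) x y; rewrite scale1r scaleN1r => ->; ring.
Qed.

Lemma ipD x y : ip (x + y) (x + y) = ip x x + 2 * ip x y + ip y y.
Proof.
have := ipsq 1 1 x y; rewrite !scale1r => ->; ring.
Qed.

Lemma ipZZ a x : ip (a *: x) (a *: x) = a ^+ 2 * ip x x.
Proof. by rewrite ipZl ipZr mulrA -expr2. Qed.

Lemma cauchy_schwarz x y : ip x y ^+ 2 <= ip x x * ip y y.
Proof.
have [x0|xn0] := eqVneq x 0.
  by rewrite x0 ip0l ip0l expr0n /= mul0r.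
have px := ip_pos xn0.
have := ip_ge0 ((ip x y / ip x x) *: x + (-1) *: y).
rewrite ipsq.
set c := ip x y; set a := ip x x; set b := ip y y => h.
have ha : a != 0 by rewrite gt_eqF.
have e : (c / a) ^+ 2 * a + 2 * (c / a) * -1 * c + (-1) ^+ 2 * b
     = (a * b - c ^+ 2) / a by field.
rewrite e in h.
have : 0 <= a * b - c ^+ 2.
  have h2 : 0 <= (a * b - c ^+ 2) / a * a by apply: mulr_ge0 => //; exact: ltW.
  by rewrite divfK in h2.
by rewrite subr_ge0 mulrC.
Qed.

Lemma ip_le_norm x y : ip x y <= ipnorm ip x * ipnorm ip y.
Proof.
rewrite /ipnorm -sqrtrM ?ip_ge0 //.
apply: le_trans (ler_norm _) _.
by rewrite -sqrtr_sqr ler_sqrt ?cauchy_schwarz // mulr_ge0 ?ip_ge0.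
Qed.

Lemma ipnorm_ge0 x : 0 <= ipnorm ip x.
Proof. exact: sqrtr_ge0. Qed.

Lemma ipnorm_sq x : ipnorm ip x ^+ 2 = ip x x.
Proof. by rewrite /ipnorm sqr_sqrtr ?ip_ge0. Qed.

Lemma ipnorm_triangle x y : ipnorm ip (x + y) <= ipnorm ip x + ipnorm ip y.
Proof.
have h := ip_le_norm x y.
have hx := ipnorm_sq x; have hy := ipnorm_sq y.
rewrite -(ger0_norm (addr_ge0 (ipnorm_ge0 x) (ipnorm_ge0 y))) -sqrtr_sqr {1}/ipnorm.
rewrite ler_sqrt ?sqr_ge0 // ipD sqrrD; lra.
Qed.

Lemma ipnormZ a x : ipnorm ip (a *: x) = `|a| * ipnorm ip x.
Proof. by rewrite /ipnorm ipZZ sqrtrM ?sqr_ge0 // sqrtr_sqr. Qed.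


Lemma ip_par p q : ip p p + ip q q =
  2 * ip (2^-1 *: (p + q)) (2^-1 *: (p + q)) + 2^-1 * ip (p - q) (p - q).
Proof.
have e1 : 2^-1 *: (p + q) = 2^-1 *: p + 2^-1 *: q by rewrite scalerDr.
have e2 : p - q = 1 *: p + (-1) *: q by rewrite scale1r scaleN1r.
by rewrite e1 e2 !ipsq; field.
Qed.

Lemma ip_eta (eta : R) p q : 0 < eta ->
  ip p p <= (1 + eta) * ip q q + (1 + eta^-1) * ip (q - p) (q - p).
Proof.
move=> he.
have e1 : p = 1 *: q + (-1) *: (q - p) by rewrite scale1r scaleN1r opprB addrC subrK.
have h := ip_ge0 (eta *: q + 1 *: (q - p)).
rewrite ipsq in h.
rewrite {1 2}e1 ipsq.
set a := ip q q; set b := ip q (q - p); set c := ip (q - p) (q - p) in h *.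
have ha : 0 <= a by apply: ip_ge0.
have hc : 0 <= c by apply: ip_ge0.
have : 0 <= eta^-1 * (eta ^+ 2 * a + 2 * eta * 1 * b + 1 ^+ 2 * c).
  by apply: mulr_ge0 => //; rewrite invr_ge0 ltW.
have -> : eta^-1 * (eta ^+ 2 * a + 2 * eta * 1 * b + 1 ^+ 2 * c)
   = eta * a + 2 * b + eta^-1 * c by field; rewrite gt_eqF.
move=> h2; set ei := eta^-1 in h2 *; lra.
Qed.
End IP.

Section Op.
Variable R : realType.
Variables (X Y : lmodType R) (ipX : X -> X -> R) (ipY : Y -> Y -> R).
Hypotheses (hX : is_inner_product ipX) (cX : ip_complete ipX)
  (hY : is_inner_product ipY).
Variables (A : {linear X -> Y}) (As : {linear Y -> X}).
Hypothesis hadj : is_adjoint ipX ipY A As.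
Hypothesis hb : forall x, ipY (A x) (A x) <= ipX x x.
Variable alpha : R.
Hypothesis halpha : 0 < alpha.

Definition J y x := ipY (A x - y) (A x - y) + alpha * ipX x x.

Lemma J_ge0 y x : 0 <= J y x.
Proof. by rewrite /J addr_ge0 ?mulr_ge0 ?(ip_ge0 hX) ?(ip_ge0 hY) // ltW. Qed.

Lemma inv_small (t : R) : 0 < t -> exists n0 : nat, forall n, (n0 <= n)%N ->
  n.+1%:R^-1 < t.
Proof.
move=> ht; exists (Num.Def.archi_bound t^-1) => n hn.
have ti : 0 < t^-1 by rewrite invr_gt0.
have h := archi_boundP (ltW ti).
have h2 : t^-1 < n.+1%:R.
  apply: lt_le_trans h _; rewrite ler_nat; apply: leq_trans hn _; exact: leqnSn.
rewrite -(invrK t) ltf_pV2 ?posrE ?ltr0Sn ?invr_gt0 //.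
Qed.

Lemma tik_exists y : exists x, As (A x) + alpha *: x = As y.
Proof.
pose E := [set r | exists x, r = J y x].
have hlb : has_lbound E by exists 0 => r [x ->]; apply: J_ge0.
have hne : E !=set0 by exists (J y 0), 0.
have hinf : has_inf E by split.
pose m := inf E.
have hmin : forall x, m <= J y x by move=> x; apply: (ge_inf hlb); exists x.
have m0 : 0 <= m by apply: lb_le_inf => // r [x ->]; apply: J_ge0.
have hseq : forall n : nat, {x | J y x < m + n.+1%:R^-1}.
  move=> n; apply: constructive_indefinite_description.
  have hi : 0 < n.+1%:R^-1 :> R by rewrite invr_gt0 ltr0Sn.
  have [r [x ->] hr] := inf_adherent hi hinf.
  by exists x.
pose u n := proj1_sig (hseq n).
have hu : forall n, J y (u n) < m + n.+1%:R^-1 by move=> n; exact: proj2_sig (hseq n).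
have hcauchy : forall e : R, 0 < e -> exists n0 : nat, forall p q : nat,
        (n0 <= p)%N -> (n0 <= q)%N -> ipnorm ipX (u p - u q) < e.
  move=> e he.
  have ht : 0 < alpha * e ^+ 2 / 4 by rewrite divr_gt0 // mulr_gt0 // exprn_gt0.
  have [n0 hn0] := inv_small ht.
  exists n0 => p q hp hq.
  have hpar := ip_par hY (A (u p) - y) (A (u q) - y).
  have hpar2 := ip_par hX (u p) (u q).
  have hmid := hmin (2^-1 *: (u p + u q)).
  have e1 : A (2^-1 *: (u p + u q)) - y = 2^-1 *: (A (u p) - y + (A (u q) - y)).
    have ey : 2^-1 *: (y + y) = y.
      by rewrite -mulr2n -scaler_nat scalerA mulVf ?pnatr_eq0 // scale1r.
    by rewrite linearZ linearD addrACA -opprD scalerBr ey.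
  have e2 : A (u p) - y - (A (u q) - y) = A (u p - u q).
    by rewrite opprB addrA subrK linearB.
  rewrite /J e1 in hmid.
  have hup := hu p; have huq := hu q.
  rewrite /J in hup huq.
  rewrite e2 in hpar.
  have hAd := ip_ge0 hY (A (u p - u q)).
  have hD := ip_ge0 hX (u p - u q).
  have hep := hn0 p hp; have heq := hn0 q hq.
  have hD2 : alpha * ipX (u p - u q) (u p - u q) < alpha * e ^+ 2.
    set D := ipX (u p - u q) (u p - u q) in hpar2 hD *.
    set ep := p.+1%:R^-1 in hup hep; set eq := q.+1%:R^-1 in huq heq.
    set t := alpha * e ^+ 2 / 4 in hep heq.
    have -> : alpha * e ^+ 2 = 4 * t by rewrite /t; field.
    set a1 := ipY _ _ in hpar hup; set a2 := ipY _ _ in hpar huq.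
    set a3 := ipY _ _ in hpar hmid.
    set b1 := ipX (u p) _ in hpar2 hup; set b2 := ipX (u q) _ in hpar2 huq.
    set b3 := ipX _ _ in hpar2 hmid.
    set AD := ipY _ _ in hpar hAd.
    have hp2 : alpha * b1 + alpha * b2 = 2 * (alpha * b3) + 2^-1 * (alpha * D) by rewrite -mulrDr hpar2; ring.
    lra.
  have hD3 : ipX (u p - u q) (u p - u q) < e ^+ 2 by rewrite -(ltr_pM2l halpha).
  rewrite /ipnorm -(ger0_norm (ltW he)) -sqrtr_sqr ltr_sqrt ?exprn_gt0 //.
have [l hl] := cX hcauchy.
have hJl : J y l <= m.
  apply/ler_addgt0Pr => eps heps.
  pose eta := eps / (2 * (m + 1)).
  have heta : 0 < eta by rewrite /eta divr_gt0 // mulr_gt0 // ltr_pwDr.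
  pose K := (1 + eta^-1) * (1 + alpha).
  have hK : 0 < K by rewrite /K mulr_gt0 // ltr_pwDr ?invr_gt0 //.
  have hc : 0 < eps / (4 * K) by rewrite divr_gt0 // mulr_gt0.
  have hsc : 0 < Num.sqrt (eps / (4 * K)) by rewrite sqrtr_gt0.
  have [n0 hn0] := hl _ hsc.
  have [n1 hn1] := inv_small (divr_gt0 heps (ltr0Sn _ 3)).
  pose n := maxn n0 n1.
  have hd := hn0 n (leq_maxl _ _).
  rewrite /ipnorm ltr_sqrt // in hd.
  have hen := hn1 n (leq_maxr _ _).
  have hen1 : n.+1%:R^-1 <= 1 :> R by rewrite invf_le1 ?ler1n ?ltr0Sn.
  have hen0 : 0 < n.+1%:R^-1 :> R by rewrite invr_gt0 ltr0Sn.
  have hun := hu n.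
  have i1 := ip_eta hY (A l - y) (A (u n) - y) heta.
  have i2 := ip_eta hX l (u n) heta.
  have e3 : A (u n) - y - (A l - y) = A (u n - l) by rewrite opprB addrA subrK linearB.
  rewrite e3 in i1.
  have hb2 := hb (u n - l).
  have hdn : 0 <= ipX (u n - l) (u n - l) by apply: ip_ge0.
  rewrite /J.
  set D := ipX (u n - l) (u n - l) in hd hb2 hdn i2.
  set AD := ipY (A (u n - l)) _ in i1 hb2.
  set Jn := J y (u n) in hun.
  have eJn : Jn = ipY (A (u n) - y) (A (u n) - y) + alpha * ipX (u n) (u n) by [].
  have hKD : K * D < eps / 4.
    have : K * D < K * (eps / (4 * K)) by rewrite ltr_pM2l.
    have -> : K * (eps / (4 * K)) = eps / 4 by field; rewrite gt_eqF.
    by [].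
  have hstep : ipY (A l - y) (A l - y) + alpha * ipX l l <= (1 + eta) * Jn + K * D.
    rewrite eJn /K.
    have : (1 + eta^-1) * AD <= (1 + eta^-1) * D.
      by rewrite ler_pM2l // ltr_pwDr ?invr_gt0.
    have ha : 0 < alpha by [].
    have := ler_pM2l ha; move=> _.
    have i2' : alpha * ipX l l <= alpha * ((1 + eta) * ipX (u n) (u n) + (1 + eta^-1) * D).
      by rewrite ler_pM2l.
    set p1 := ipY (A l - y) _ in i1 *; set p2 := ipY (A (u n) - y) _ in i1 *.
    set x1 := ipX l l in i2' *; set x2 := ipX (u n) (u n) in i2' *.
    set ei := eta^-1 in i1 i2' *.
    nra.
  have hm1 : eta * (m + 1) = eps / 2.
    rewrite /eta; field; rewrite gt_eqF // ltr_pwDr //.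
  have h1 : (1 + eta) * Jn <= (1 + eta) * (m + n.+1%:R^-1).
    by rewrite ler_pM2l ?ltW // ltr_pwDr.
  have h2 : eta * n.+1%:R^-1 <= eta * 1 by rewrite ler_pM2l.
  set en := n.+1%:R^-1 in h1 h2 hen hen1 hen0.
  nra.
pose g := As (A l - y) + alpha *: l.
have hJ : forall t, J y (l + t *: g) =
   J y l + 2 * t * ipX g g + t ^+ 2 * (ipY (A g) (A g) + alpha * ipX g g).
  move=> t.
  have e4 : A (l + t *: g) - y = 1 *: (A l - y) + t *: A g.
    by rewrite linearD linearZ scale1r addrAC.
  have e5 : l + t *: g = 1 *: l + t *: g by rewrite scale1r.
  rewrite /J e4 e5 (ipsq hY) (ipsq hX).
  have e6 : ipX g g = ipY (A g) (A l - y) + alpha * ipX g l.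
    by rewrite hadj {1}/g (ipDr hX) (ipZr hX).
  rewrite e6 (ip_sym hY (A l - y)) (ip_sym hX l).
  rewrite expr1n !mul1r; ring.
have hg : ipX g g = 0.
  set G := ipX g g in hJ *.
  set Q := ipY (A g) (A g) + alpha * ipX g g in hJ.
  have hQ : 0 <= Q by rewrite /Q addr_ge0 ?mulr_ge0 ?(ip_ge0 hY) ?(ip_ge0 hX) // ltW.
  have hG : 0 <= G by apply: ip_ge0.
  have hQ1 : 0 < Q + 1 by lra.
  pose t := - G / (Q + 1).
  have h := hmin (l + t *: g); rewrite hJ in h.
  have ht : t * (Q + 1) = - G by rewrite /t divfK // gt_eqF.
  have h' : 0 <= 2 * t * G + t ^+ 2 * Q by lra.
  have h2 : 0 <= (2 * t * G + t ^+ 2 * Q) * (Q + 1) by apply: mulr_ge0 => //; exact: ltW.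
  have e7 : (2 * t * G + t ^+ 2 * Q) * (Q + 1) = - 2 * G * G - t * G * Q.
    have -> : (2 * t * G + t ^+ 2 * Q) * (Q + 1) = 2 * G * (t * (Q + 1)) + t * Q * (t * (Q + 1)).
      ring.
    rewrite ht; ring.
  rewrite e7 in h2.
  have htG : t * G * Q = - G * G * Q / (Q + 1) by rewrite /t; field; rewrite gt_eqF.
  rewrite htG in h2.
  have h3 : 0 <= G * G * Q / (Q + 1) by rewrite divr_ge0 ?mulr_ge0 // ltW.
  have h4 : G * G * Q / (Q + 1) = - (- G * G * Q / (Q + 1)) by rewrite !mulNr opprK.
  nra.
exists l.
have := ip_eq0 hX hg; rewrite /g linearB => /eqP.
rewrite addrAC subr_eq0 => /eqP ->.
by [].
Qed.
End Op.

Theorem theorem2 (R : realType) (X Y : lmodType R)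
  (ipX : X -> X -> R) (ipY : Y -> Y -> R)
  (hX : is_hilbert ipX) (hY : is_hilbert ipY)
  (A : {linear X -> Y}) (Astar : {linear Y -> X})
  (hAstar : is_adjoint ipX ipY A Astar)
  (hAcomp : compact_op ipX ipY A)
  (hAnorm : opnorm ipX ipY A = 1)
  (N : nat) (XN : set X) (hXN : subspace_dim XN N)
  (rho C : R) (hrho : 0 < rho) (hC : 0 < C)
  (xdag : X)
  (hi : XN xdag /\ exists z : Y, [/\ (A @` XN) z, ipnorm ipY z <= rho & xdag = Astar z])
  (hii : forall alpha : R, 0 < alpha -> alpha <= 1 ->
     opnorm_on ipX ipY (A @` XN) (tikhonov A Astar alpha) <= C * N%:R)
  (delta : R) (hdelta : 0 <= delta) (ydelta : Y)
  (hyd : ipnorm ipY (ydelta - A xdag) <= delta) :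
  forall alpha : R, 0 < alpha -> alpha <= 1 ->
    ipnorm ipX (tikhonov A Astar alpha ydelta - xdag) <=
      delta / (2 * Num.sqrt alpha) +
      (if (2 * C * N%:R)^-1 < Num.sqrt alpha
       then Num.sqrt alpha / 2 * rho
       else alpha * C * N%:R * rho).
Proof.
move=> alpha ha ha1.
case: hX => hX cX; case: hY => hY _.
have hb : forall x, ipY (A x) (A x) <= ipX x x.
  move: hAnorm; rewrite /opnorm; set S := [set r | _] => hAn.
  have hS : has_sup S.
    case: (pselect (has_sup S)) => // hns.
    by move: hAn; rewrite sup_out // => /eqP; rewrite eq_sym oner_eq0.
  have hub := sup_upper_bound hS; rewrite hAn in hub.
  move=> x.
  have [->|xn0] := eqVneq x 0.
    by rewrite linear0 (ip0l hY) (ip0l hX).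
  have px := ip_pos hX xn0.
  set c := ipnorm ipX x.
  have hc : 0 < c by rewrite /c /ipnorm sqrtr_gt0.
  have hci : 0 <= c^-1 by rewrite invr_ge0 ltW.
  have h1 : ipnorm ipY (A (c^-1 *: x)) <= 1.
    apply: hub; exists (c^-1 *: x); split => //.
    by rewrite (ipnormZ hX) -/c ger0_norm // mulVf ?gt_eqF.
  rewrite linearZ (ipnormZ hY) ger0_norm // in h1.
  have h2 : ipnorm ipY (A x) <= c.
    have hci' : 0 < c^-1 by rewrite invr_gt0.
    by rewrite -(ler_pM2l hci') mulVf ?gt_eqF.
  rewrite -(ipnorm_sq hY) -(ipnorm_sq hX) !expr2.
  by apply: ler_pM => //; apply: ipnorm_ge0.
set T := tikhonov A Astar alpha.
pose L x := Astar (A x) + alpha *: x.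
have hT : forall y, L (T y) = Astar y.
  move=> y; rewrite /L /T /tikhonov.
  pose P := fun x => Astar (A x) + alpha *: x = Astar y.
  exact: (@epsilon_spec X (inhabits 0) P (tik_exists hX cX hY hAstar hb ha y)).
have LB : forall a b, L (a - b) = L a - L b.
  move=> a b; rewrite /L (raddfB A) (raddfB Astar) scalerBr.
  by rewrite opprD addrACA.
have LD : forall a b, L (a + b) = L a + L b.
  by move=> a b; rewrite /L (raddfD A) (raddfD Astar) scalerDr addrACA.
have LZ : forall (k : R) a, L (k *: a) = k *: L a.
  by move=> k a; rewrite /L !linearZ scalerDr; congr (_ + _); rewrite !scalerA mulrC.
have L0 : forall x, L x = 0 -> x = 0.
  move=> x hx.
  have h : ipX (L x) x = 0 by rewrite hx (ip0l hX).
  rewrite /L (ipDl hX) (ipZl hX) (ip_sym hX) -hAstar in h.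
  have hp := ip_ge0 hY (A x); have hq := ip_ge0 hX x.
  apply: (ip_eq0 hX).
  have : alpha * ipX x x = 0 by have := mulr_ge0 (ltW ha) hq; lra.
  by move/eqP; rewrite mulf_eq0 gt_eqF //= => /eqP.
have Luniq : forall a b, L a = L b -> a = b.
  move=> a b e; apply/eqP; rewrite -subr_eq0; apply/eqP; apply: L0.
  by rewrite LB e subrr.
have TD : forall a b, T (a + b) = T a + T b.
  by move=> a b; apply: Luniq; rewrite LD !hT linearD.
have TZ : forall (k : R) a, T (k *: a) = k *: T a.
  by move=> k a; apply: Luniq; rewrite LZ !hT linearZ.
have noise : forall w, 2 * Num.sqrt alpha * ipnorm ipX (T w) <= ipnorm ipY w.
  move=> w.
  have h := hT w.
  have h1 : ipX (L (T w)) (T w) = ipX (Astar w) (T w) by rewrite h.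
  rewrite /L (ipDl hX) (ipZl hX) (ip_sym hX) -hAstar (ip_sym hX) -hAstar in h1.
  have cs := cauchy_schwarz hY (A (T w)) w.
  set P := ipY (A (T w)) (A (T w)) in h1 cs.
  set c := ipY (A (T w)) w in h1 cs.
  set W := ipY w w in cs.
  set Xn := ipX (T w) (T w) in h1.
  have hP : 0 <= P by apply: ip_ge0.
  have hW : 0 <= W by apply: ip_ge0.
  have hXn : 0 <= Xn by apply: ip_ge0.
  have h4 : 4 * (alpha * Xn) <= W.
    have e : alpha * Xn = c - P by lra.
    rewrite e; have := sqr_ge0 (W - 4 * P); nra.
  have s4 : Num.sqrt 4 = 2 :> R.
    by rewrite (_ : 4 = 2 ^+ 2) ?sqrtr_sqr ?ger0_norm // expr2; lra.
  rewrite /ipnorm -/Xn -/W.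
  have h40 : 0 <= 4 :> R by [].
  have h4a : 0 <= 4 * alpha by rewrite mulr_ge0 // ltW.
  have -> : 2 * Num.sqrt alpha * Num.sqrt Xn = Num.sqrt (4 * alpha * Xn).
    by rewrite (sqrtrM _ h4a) (sqrtrM _ h40) s4.
  by rewrite ler_sqrt // -mulrA.
have T0 : T 0 = 0.
  apply: Luniq; rewrite hT /L (raddf0 A) (raddf0 Astar) scaler0 addr0 //.
case: hi => hxN [z [hzS hzr hxz]].
have TAx : T (A xdag) = xdag - alpha *: T z.
  apply: Luniq; rewrite hT LB LZ hT /L hxz.
  by rewrite -!hxz addrK.
set w := ydelta - A xdag.
have Tyd : T ydelta - xdag = T w - alpha *: T z.
  have -> : ydelta = w + A xdag by rewrite /w subrK.
  by rewrite TD TAx addrA [_ - alpha *: _ - _]addrAC addrK.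
rewrite Tyd.
have tri := ipnorm_triangle hX (T w) ((- alpha) *: T z).
have ha0 : 0 <= alpha by apply: ltW.
rewrite (ipnormZ hX) normrN (ger0_norm ha0) scaleNr in tri.
apply: le_trans tri _.
have sa : 0 < Num.sqrt alpha by rewrite sqrtr_gt0.
have hw : ipnorm ipX (T w) <= delta / (2 * Num.sqrt alpha).
  rewrite ler_pdivlMr ?mulr_gt0 // mulrC.
  exact: le_trans (noise w) hyd.
apply: lerD => //.
have hz0 := ipnorm_ge0 ipY z.
have hTz0 := ipnorm_ge0 ipX (T z).
case: ifP => _.
  have hn := noise z.
  have ea : alpha = Num.sqrt alpha * Num.sqrt alpha by rewrite -expr2 sqr_sqrtr ?ltW.
  rewrite {1}ea.
  have : 2 * Num.sqrt alpha * ipnorm ipX (T z) <= rho by apply: le_trans hn hzr.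
  move=> h; nra.
have hTz : ipnorm ipX (T z) <= C * N%:R * ipnorm ipY z.
  have [z0|zn0] := eqVneq z 0.
    rewrite z0 T0 /ipnorm (ip0l hX) (ip0l hY) sqrtr0 mulr0 //.
  have pz := ip_pos hY zn0.
  set c := ipnorm ipY z.
  have hc : 0 < c by rewrite /c /ipnorm sqrtr_gt0.
  have hci : 0 <= c^-1 by rewrite invr_ge0 ltW.
  have hii' := hii alpha ha ha1.
  rewrite /opnorm_on -/T in hii'.
  set S := [set r | _] in hii'.
  have hzS' : (A @` XN) (c^-1 *: z).
    case: hzS => x0 hx0 <-.
    exists (c^-1 *: x0); last by rewrite linearZ.
    case: hXN => b [_ eXN]; rewrite eXN in hx0 *.
    case: hx0 => coef ->.
    exists (fun i => c^-1 * coef i); rewrite scaler_sumr.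
    by apply: eq_bigr => i _; rewrite scalerA.
  have hnz : ipnorm ipY (c^-1 *: z) = 1.
    by rewrite (ipnormZ hY) -/c ger0_norm // mulVf ?gt_eqF.
  have hinS : S (ipnorm ipX (T (c^-1 *: z))) by exists (c^-1 *: z); split; rewrite ?hnz.
  have hS : has_sup S.
    split; first by exists (ipnorm ipX (T (c^-1 *: z))).
    exists (2 * Num.sqrt alpha)^-1 => r [z' [_ hz' ->]].
    have h2s : 0 < 2 * Num.sqrt alpha by rewrite mulr_gt0.
    rewrite -[X in _ <= X]mul1r ler_pdivlMr // mulrC.
    exact: le_trans (noise z') hz'.
  have h1 := sup_upper_bound hS hinS.
  have h2 : ipnorm ipX (T (c^-1 *: z)) <= C * N%:R := le_trans h1 hii'.
  rewrite TZ (ipnormZ hX) ger0_norm // in h2.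
  by rewrite -ler_pdivrMr // mulrC.
have hCN : 0 <= C * N%:R by rewrite mulr_ge0 ?ler0n ?ltW.
have h3 : C * N%:R * ipnorm ipY z <= C * N%:R * rho by apply: ler_wpM2l.
have h4 := le_trans hTz h3.
by have := ler_wpM2l (ltW ha) h4; rewrite !mulrA.
Qed.
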